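(* Let $N\ge 2$ be an integer, $\omega_0>0$, $f_0>0$, $\sigma=f_0/\omega_0^2$. Let $x_0(t),\dots,x_{N-1}(t)$ solve \[ \ddot x_0=0,\qquad \ddot x_k=\omega_0^2\,(x_{k-1}-2x_k+x_{k+1})\ (1\le k\le N-2),\qquad \ddot x_{N-1}=\omega_0^2\,(x_{N-2}-x_{N-1})+f_0, \] with $x_k(0)=0$, $\dot x_k(0)=0$ for all $k$. Then for $n=0,\dots,N-1$ and $t\ge 0$, \[ x_n(t)=\sigma\left[n-\frac{1}{2N-1}\sum_{m=1}^{2N-2}\gamma_{m,N,n}\cos(\omega_m t)\right], \] where \[ \gamma_{m,N,n}=\frac{1}{\sin^2\frac{\pi m}{4N-2}}\,\sin\frac{\pi m}{2}\,\cos\frac{\pi m}{4N-2}\,\sin\frac{\pi nm}{2N-1},\qquad \omega_m=2\omega_0\sin\frac{\pi m}{4N-2}. \] *)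

(* Defs.v *)
From Stdlib Require Import Reals.
From Coquelicot Require Import Coquelicot.
Open Scope R_scope.

Definition gamma_coef (m N n : nat) : R :=
  / (sin (PI * INR m / (4 * INR N - 2))) ^ 2
  * sin (PI * INR m / 2)
  * cos (PI * INR m / (4 * INR N - 2))
  * sin (PI * INR n * INR m / (2 * INR N - 1)).

Definition omega_m (w0 : R) (m N : nat) : R :=
  2 * w0 * sin (PI * INR m / (4 * INR N - 2)).

Definition chain_solution (N : nat) (w0 f0 : R) (n : nat) (t : R) : R :=
  (f0 / w0 ^ 2) *
  (INR n - / (2 * INR N - 1) *
     sum_n_m (fun m => gamma_coef m N n * cos (omega_m w0 m N * t)) 1 (2 * N - 2)).

(* Main.v *)
Require Import Defs.
From Stdlib Require Import Reals Lra Lia.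
From Coquelicot Require Import Coquelicot.
Open Scope R_scope.

Lemma sin_nat_PI m : sin (INR m * PI) = 0.
Proof. apply sin_eq_0_1. exists (Z.of_nat m). now rewrite INR_IZR_INZ. Qed.

Lemma cos_nat_PI_S p : cos (INR (S p) * PI) = - cos (INR p * PI).
Proof. rewrite S_INR, Rmult_plus_distr_r, Rmult_1_l. apply neg_cos. Qed.

Lemma prod_to_sum A B C :
  sin A * cos C * sin B =
  / 4 * (cos (A - B - C) + cos (A - B + C) - cos (A + B - C) - cos (A + B + C)).
Proof.
  rewrite (cos_minus (A - B)), (cos_plus (A - B)), (cos_minus (A + B)), (cos_plus (A + B)).
  rewrite cos_minus, sin_minus, cos_plus, sin_plus. field.
Qed.

Lemma dirichlet x K :
  2 * sin (x / 2) * sum_n_m (fun m => cos (INR m * x)) 1 K =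
  sin ((INR K + / 2) * x) - sin (x / 2).
Proof.
  induction K.
  - rewrite sum_n_m_zero by lia. change (@zero _) with 0. change (INR 0) with 0. replace ((0 + /2) * x) with (x/2) by field. ring.
  - rewrite sum_n_Sm by lia. change (@plus _ ?a ?b) with (Rplus a b).
    rewrite Rmult_plus_distr_l, IHK.
    replace ((INR (S K) + /2) * x) with (INR (S K) * x + x/2) by (rewrite S_INR; field).
    replace ((INR K + /2) * x) with (INR (S K) * x - x/2) by (rewrite S_INR; field).
    rewrite sin_plus, sin_minus. ring.
Qed.

Lemma INR_N_ge1 N : (1 <= N)%nat -> 1 <= INR N.
Proof. intro H. apply le_INR in H. simpl in H. lra. Qed.

Lemma Csum N p q : (1 <= N)%nat -> (0 < p)%nat -> (p + 2 < 4 * N)%nat -> q = INR p ->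
  sum_n_m (fun m => cos (INR m * (q * PI / (2 * INR N - 1)))) 1 (2 * N - 2)
  = - (1 + cos (q * PI)) / 2.
Proof.
  intros HN Hp Hp2 Hq.
  pose proof (INR_N_ge1 N HN) as HN1.
  assert (HL : 0 < 2 * INR N - 1) by lra.
  set (x := q * PI / (2 * INR N - 1)).
  pose proof (dirichlet x (2 * N - 2)) as D.
  assert (E : INR (2 * N - 2) = 2 * INR N - 2).
  { rewrite minus_INR by lia. rewrite mult_INR. simpl. ring. }
  rewrite E in D.
  replace ((2 * INR N - 2 + / 2) * x) with (q * PI - x / 2) in D
    by (unfold x; field; lra).
  rewrite sin_minus in D. rewrite Hq, sin_nat_PI in D. rewrite <- Hq in D.
  assert (Hs : 0 < sin (x / 2)).
  { apply sin_gt_0.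
    - unfold x. rewrite Hq. apply lt_0_INR in Hp. pose proof PI_RGT_0.
      apply Rdiv_lt_0_compat; [|lra]. apply Rdiv_lt_0_compat; [nra|lra].
    - unfold x. apply lt_INR in Hp2. rewrite plus_INR, mult_INR in Hp2.
      simpl in Hp2. rewrite <- Hq in Hp2. pose proof PI_RGT_0.
      apply (Rmult_lt_reg_r (2 * (2 * INR N - 1))); [lra|].
      replace (q * PI / (2 * INR N - 1) / 2 * (2 * (2 * INR N - 1))) with (q * PI) by (field; lra).
      nra. }
  apply (Rmult_eq_reg_l (2 * sin (x / 2))); [|lra].
  rewrite D. field.
Qed.

Definition th (m N : nat) : R := PI * INR m / (4 * INR N - 2).

Lemma gamma_alt m N n : (1 <= N)%nat ->
  gamma_coef m N n = / sin (th m N) ^ 2 * sin (PI * INR m / 2) * cos (th m N)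
                     * sin (2 * INR n * th m N).
Proof.
  intro HN. pose proof (INR_N_ge1 N HN). unfold gamma_coef, th.
  do 2 f_equal. field. lra.
Qed.

Lemma gamma_lap m N n : (1 <= N)%nat ->
  gamma_coef m N n - 2 * gamma_coef m N (S n) + gamma_coef m N (S (S n))
  = -4 * sin (th m N) ^ 2 * gamma_coef m N (S n).
Proof.
  intro HN. rewrite !gamma_alt by exact HN.
  set (a := th m N). set (b := 2 * INR (S n) * a).
  replace (2 * INR n * a) with (b - 2 * a) by (unfold b; rewrite S_INR; ring).
  replace (2 * INR (S (S n)) * a) with (b + 2 * a) by (unfold b; rewrite !S_INR; ring).
  rewrite sin_minus, sin_plus, cos_2a_sin. simpl. ring.
Qed.

Lemma gamma_free m M :
  gamma_coef m (S M) (S M) = gamma_coef m (S M) M.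
Proof.
  rewrite !gamma_alt by lia.
  set (a := th m (S M)).
  assert (E : 2 * INR (S M) * a = PI * INR m - 2 * INR M * a).
  { unfold a, th. rewrite S_INR. pose proof (pos_INR M). field. lra. }
  rewrite E, sin_minus. rewrite (Rmult_comm PI), sin_nat_PI.
  set (h := INR m * PI / 2).
  replace (PI * INR m / 2) with h by (unfold h; field).
  replace (INR m * PI) with (2 * h) by (unfold h; field).
  rewrite cos_2a_cos.
  assert (sin (2 * h) = 0) as Z by (unfold h; replace (2 * (INR m * PI / 2)) with (INR m * PI) by field; apply sin_nat_PI).
  rewrite sin_2a in Z.
  replace (/ sin a ^ 2 * sin h * cos a * (0 * cos (2 * INR M * a) - (2 * cos h * cos h - 1) * sin (2 * INR M * a)))
   with (/ sin a ^ 2 * sin h * cos a * sin (2 * INR M * a) - / sin a ^ 2 * cos a * sin (2 * INR M * a) * cos h * (2 * sin h * cos h)) by ring.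
  rewrite Z. ring.
Qed.

Lemma sum_add a b f g : sum_n_m (fun m => f m + g m) a b = sum_n_m f a b + sum_n_m g a b.
Proof. exact (sum_n_m_plus f g a b). Qed.
Lemma sum_scal a b c f : sum_n_m (fun m => c * f m) a b = c * sum_n_m f a b.
Proof. exact (sum_n_m_mult_l c f a b). Qed.
Lemma sum_ext (f g : nat -> R) a b : (forall k, (a <= k <= b)%nat -> f k = g k) ->
  @eq R (sum_n_m f a b) (sum_n_m g a b).
Proof. apply sum_n_m_ext_loc. Qed.

Definition Cq N q : R := sum_n_m (fun m => cos (INR m * (q * PI / (2 * INR N - 1)))) 1 (2 * N - 2).
Definition Vn N n : R := sum_n_m (fun m => sin (th m N) ^ 2 * gamma_coef m N n) 1 (2 * N - 2).

Lemma sin_th_pos m N : (1 <= N)%nat -> (1 <= m)%nat -> (m + 2 < 4 * N)%nat -> 0 < sin (th m N).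
Proof.
  intros HN Hm Hm2. pose proof (INR_N_ge1 N HN). pose proof PI_RGT_0.
  apply le_INR in Hm. apply lt_INR in Hm2. rewrite plus_INR, mult_INR in Hm2. simpl in Hm, Hm2.
  unfold th. apply sin_gt_0.
  - apply Rdiv_lt_0_compat; nra.
  - apply (Rmult_lt_reg_r (4 * INR N - 2)); [lra|].
    replace (PI * INR m / (4 * INR N - 2) * (4 * INR N - 2)) with (PI * INR m) by (field; lra).
    nra.
Qed.

Lemma V_expand N n : (1 <= N)%nat ->
  Vn N n = / 4 * (Cq N (INR N - INR n - 1) + Cq N (INR N - INR n)
                  - Cq N (INR N + INR n - 1) - Cq N (INR N + INR n)).
Proof.
  intro HN. pose proof (INR_N_ge1 N HN). unfold Vn, Cq.
  set (L := 2 * INR N - 1).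
  rewrite (sum_ext _ (fun m => / 4 * cos (INR m * ((INR N - INR n - 1) * PI / L))
     + / 4 * cos (INR m * ((INR N - INR n) * PI / L))
     + (- / 4) * cos (INR m * ((INR N + INR n - 1) * PI / L))
     + (- / 4) * cos (INR m * ((INR N + INR n) * PI / L)))).
  - rewrite !sum_add, !sum_scal. ring.
  - intros m [Hm1 Hm2].
    assert (Hs : 0 < sin (th m N)) by (apply sin_th_pos; lia).
    rewrite gamma_alt by exact HN.
    replace (sin (th m N) ^ 2 * (/ sin (th m N) ^ 2 * sin (PI * INR m / 2) * cos (th m N) * sin (2 * INR n * th m N)))
      with (sin (PI * INR m / 2) * cos (th m N) * sin (2 * INR n * th m N)) by (field; lra).
    rewrite prod_to_sum.
    unfold th, L.
    replace (PI * INR m / 2 - 2 * INR n * (PI * INR m / (4 * INR N - 2)) - PI * INR m / (4 * INR N - 2))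
      with (INR m * ((INR N - INR n - 1) * PI / (2 * INR N - 1))) by (field; lra).
    replace (PI * INR m / 2 - 2 * INR n * (PI * INR m / (4 * INR N - 2)) + PI * INR m / (4 * INR N - 2))
      with (INR m * ((INR N - INR n) * PI / (2 * INR N - 1))) by (field; lra).
    replace (PI * INR m / 2 + 2 * INR n * (PI * INR m / (4 * INR N - 2)) - PI * INR m / (4 * INR N - 2))
      with (INR m * ((INR N + INR n - 1) * PI / (2 * INR N - 1))) by (field; lra).
    replace (PI * INR m / 2 + 2 * INR n * (PI * INR m / (4 * INR N - 2)) + PI * INR m / (4 * INR N - 2))
      with (INR m * ((INR N + INR n) * PI / (2 * INR N - 1))) by (field; lra).
    ring.
Qed.

Lemma V_mid N n : (1 <= n)%nat -> (n + 2 <= N)%nat -> Vn N n = 0.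
Proof.
  intros Hn HnN. rewrite V_expand by lia. unfold Cq.
  rewrite (Csum N (N - n - 1)) by (try lia; rewrite !minus_INR by lia; simpl; ring).
  rewrite (Csum N (N - n)) by (try lia; rewrite !minus_INR by lia; simpl; ring).
  rewrite (Csum N (N + n - 1)) by (try lia; rewrite !minus_INR, plus_INR by lia; simpl; ring).
  rewrite (Csum N (N + n)) by (try lia; rewrite plus_INR; simpl; ring).
  replace (INR N - INR n - 1) with (INR (N - n - 1)) by (rewrite !minus_INR by lia; simpl; ring).
  replace (INR N + INR n - 1) with (INR (N + n - 1)) by (rewrite minus_INR, plus_INR by lia; simpl; ring).
  replace (INR N - INR n) with (INR (S (N - n - 1))) by (rewrite S_INR, !minus_INR by lia; simpl; ring).
  replace (INR N + INR n) with (INR (S (N + n - 1))) by (rewrite S_INR, minus_INR, plus_INR by lia; simpl; ring).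
  rewrite !cos_nat_PI_S. field.
Qed.

Lemma V_last N : (2 <= N)%nat -> Vn N (N - 1) = (2 * INR N - 1) / 4.
Proof.
  intro HN. rewrite V_expand by lia.
  assert (En : INR (N - 1) = INR N - 1) by (rewrite minus_INR by lia; simpl; ring).
  rewrite En.
  assert (C0 : Cq N (INR N - (INR N - 1) - 1) = 2 * INR N - 2).
  { unfold Cq. rewrite (sum_ext _ (fun _ => 1)).
    - rewrite sum_n_m_const. rewrite minus_INR by lia. rewrite S_INR, minus_INR by lia.
      rewrite mult_INR. simpl. ring.
    - intros k _. replace (INR k * ((INR N - (INR N - 1) - 1) * PI / (2 * INR N - 1))) with 0
        by (pose proof (INR_N_ge1 N ltac:(lia)); field; lra). apply cos_0. }
  assert (C1 : Cq N (INR N - (INR N - 1)) = 0).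
  { unfold Cq. rewrite (Csum N 1) by (try lia; simpl; ring).
    replace (INR N - (INR N - 1)) with 1 by ring. rewrite Rmult_1_l, cos_PI. field. }
  assert (C2 : Cq N (INR N + (INR N - 1) - 1) = - (1 + cos (INR (2 * N - 2) * PI)) / 2).
  { unfold Cq. rewrite (Csum N (2 * N - 2)) by (try lia; rewrite minus_INR, mult_INR by lia; simpl; ring).
    f_equal. f_equal. f_equal. f_equal. rewrite minus_INR, mult_INR by lia; simpl; ring. }
  assert (C3 : Cq N (INR N + (INR N - 1)) = - (1 + cos (INR (S (2 * N - 2)) * PI)) / 2).
  { unfold Cq. rewrite (Csum N (S (2 * N - 2))) by (try lia; rewrite S_INR, minus_INR, mult_INR by lia; simpl; ring).
    f_equal. f_equal. f_equal. f_equal. rewrite S_INR, minus_INR, mult_INR by lia; simpl; ring. }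
  rewrite C0, C1, C2, C3, cos_nat_PI_S. field.
Qed.

Definition Sg N n : R := sum_n_m (fun m => gamma_coef m N n) 1 (2 * N - 2).

Lemma Sg0 N : (1 <= N)%nat -> Sg N 0 = 0.
Proof.
  intro HN. unfold Sg. rewrite (sum_ext _ (fun _ => 0)).
  - rewrite sum_n_m_const. ring.
  - intros k _. rewrite gamma_alt by exact HN.
    replace (2 * INR 0 * th k N) with 0 by (simpl; ring). rewrite sin_0. ring.
Qed.

Lemma Sg_lap N j : (1 <= N)%nat -> Sg N j - 2 * Sg N (S j) + Sg N (S (S j)) = -4 * Vn N (S j).
Proof.
  intro HN.
  assert (H : sum_n_m (fun m => gamma_coef m N j + (-2) * gamma_coef m N (S j) + gamma_coef m N (S (S j))) 1 (2 * N - 2)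
     = sum_n_m (fun m => -4 * (sin (th m N) ^ 2 * gamma_coef m N (S j))) 1 (2 * N - 2) :> R).
  { apply sum_ext. intros k _. rewrite <- Rmult_assoc, <- gamma_lap by exact HN. ring. }
  rewrite !sum_add, !sum_scal in H. unfold Sg, Vn. lra.
Qed.

Lemma Sg_free M : Sg (S M) (S M) = Sg (S M) M.
Proof. unfold Sg. apply sum_ext. intros k _. apply gamma_free. Qed.

Lemma Sg_lin N n : (2 <= N)%nat -> (n <= N - 1)%nat -> Sg N n = (2 * INR N - 1) * INR n.
Proof.
  intros HN Hn.
  destruct N as [|[|M]]; try lia.
  set (N := S (S M)).
  set (L := 2 * INR N - 1).
  set (D := fun k => Sg N (S k) - Sg N k).
  assert (DM : D M = L).
  { pose proof (Sg_lap N M ltac:(unfold N; lia)) as H1.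
    pose proof (V_last N ltac:(unfold N; lia)) as H2.
    replace (N - 1)%nat with (S M) in H2 by (unfold N; lia).
    pose proof (Sg_free (S M)) as H3. fold N in H3.
    change (S (S M)) with N in H1. unfold D. fold L in H2. lra. }
  assert (Dall : forall i, (i <= M)%nat -> D (M - i)%nat = L).
  { induction i; intro Hi.
    - rewrite Nat.sub_0_r. exact DM.
    - replace (M - i)%nat with (S (M - S i)) in IHi by lia.
      pose proof (Sg_lap N (M - S i) ltac:(unfold N; lia)) as H1.
      rewrite (V_mid N (S (M - S i))) in H1 by (unfold N; lia).
      specialize (IHi ltac:(lia)). unfold D in *. lra. }
  assert (Hk : forall k, (k <= S M)%nat -> Sg N k = L * INR k).
  { induction k; intro Hk.
    - rewrite Sg0 by (unfold N; lia). simpl. ring.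
    - rewrite S_INR. specialize (IHk ltac:(lia)).
      pose proof (Dall (M - k)%nat ltac:(lia)) as H.
      replace (M - (M - k))%nat with k in H by lia. unfold D in H. lra. }
  apply Hk. simpl in Hn. lia.
Qed.

Lemma is_derive_eq (f : R -> R) x l1 l2 : is_derive f x l1 -> l1 = l2 -> is_derive f x l2.
Proof. intros H E; subst; exact H. Qed.

Lemma deriv_plus (f g : R -> R) df dg x : is_derive f x df -> is_derive g x dg ->
  is_derive (fun t => f t + g t) x (df + dg).
Proof.
  intros Hf Hg. auto_derive.
  - split; [exists df; exact Hf | split; [exists dg; exact Hg | exact I]].
  - replace (Derive (fun x0 : R => f x0) x) with df by (symmetry; apply is_derive_unique; exact Hf).
    replace (Derive (fun x0 : R => g x0) x) with dg by (symmetry; apply is_derive_unique; exact Hg). ring.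
Qed.

Lemma deriv_zero x : is_derive (fun _ : R => 0) x 0.
Proof. auto_derive; auto. Qed.

Lemma is_derive_sum (f : nat -> R -> R) (df : nat -> R) a b x :
  (forall k, is_derive (f k) x (df k)) ->
  is_derive (fun t => sum_n_m (fun k => f k t) a b) x (sum_n_m df a b).
Proof.
  intro H. induction b.
  - destruct a.
    + apply (is_derive_ext (f 0%nat)). { intro t. now rewrite sum_n_n. }
      rewrite sum_n_n. apply H.
    + apply (is_derive_ext (fun _ => 0)). { intro t. now rewrite sum_n_m_zero by lia. }
      rewrite sum_n_m_zero by lia. apply deriv_zero.
  - destruct (Compare_dec.le_lt_dec a (S b)) as [Hab|Hab].
    + apply (is_derive_ext (fun t => Rplus (sum_n_m (fun k => f k t) a b) (f (S b) t))).
      { intro t. now rewrite sum_n_Sm. }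
      rewrite sum_n_Sm by exact Hab. apply deriv_plus; [exact IHb | apply H].
    + apply (is_derive_ext (fun _ => 0)). { intro t. now rewrite sum_n_m_zero by lia. }
      rewrite sum_n_m_zero by lia. apply deriv_zero.
Qed.

Lemma deriv_form1 (S : R -> R) dS c a d x : is_derive S x dS ->
  is_derive (fun t => c * (a - d * S t)) x (c * (- (d * dS))).
Proof.
  intro H. auto_derive.
  - exists dS; exact H.
  - replace (Derive (fun x0 : R => S x0) x) with dS by (symmetry; apply is_derive_unique; exact H). ring.
Qed.

Lemma deriv_form2 (S : R -> R) dS c d x : is_derive S x dS ->
  is_derive (fun t => c * (d * S t)) x (c * (d * dS)).
Proof.
  intro H. auto_derive.
  - exists dS; exact H.
  - replace (Derive (fun x0 : R => S x0) x) with dS by (symmetry; apply is_derive_unique; exact H). ring.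
Qed.

Definition yd N w0 f0 n t : R := (f0 / w0 ^ 2) * (/ (2 * INR N - 1) *
  sum_n_m (fun m => gamma_coef m N n * omega_m w0 m N * sin (omega_m w0 m N * t)) 1 (2 * N - 2)).
Definition ydd N w0 f0 n t : R := (f0 / w0 ^ 2) * (/ (2 * INR N - 1) *
  sum_n_m (fun m => gamma_coef m N n * omega_m w0 m N ^ 2 * cos (omega_m w0 m N * t)) 1 (2 * N - 2)).

Lemma y_deriv N w0 f0 n t : is_derive (chain_solution N w0 f0 n) t (yd N w0 f0 n t).
Proof.
  unfold chain_solution, yd.
  eapply is_derive_eq.
  - apply deriv_form1. apply is_derive_sum. intro k.
    instantiate (1 := fun k => (-1) * (gamma_coef k N n * omega_m w0 k N * sin (omega_m w0 k N * t))).
    simpl. auto_derive; [auto | ring].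
  - change (@eq R (f0 / w0 ^ 2 * - (/ (2 * INR N - 1) * sum_n_m (fun k => (-1) * (gamma_coef k N n * omega_m w0 k N * sin (omega_m w0 k N * t))) 1 (2 * N - 2))) (f0 / w0 ^ 2 * (/ (2 * INR N - 1) * sum_n_m (fun m => gamma_coef m N n * omega_m w0 m N * sin (omega_m w0 m N * t)) 1 (2 * N - 2)))). rewrite sum_scal. ring.
Qed.

Lemma yd_deriv N w0 f0 n t : is_derive (yd N w0 f0 n) t (ydd N w0 f0 n t).
Proof.
  unfold ydd, yd.
  eapply is_derive_eq.
  - apply deriv_form2. apply is_derive_sum. intro k.
    instantiate (1 := fun k => gamma_coef k N n * omega_m w0 k N ^ 2 * cos (omega_m w0 k N * t)).
    simpl. auto_derive; [auto | ring].
  - reflexivity.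
Qed.

Lemma tiny (X A w : R) : w <> 0 -> A = - / w ^ 2 * X -> X = - w ^ 2 * A.
Proof. intros Hw H. rewrite H. field. exact Hw. Qed.

Lemma ode_mid N w0 f0 j t : (1 <= N)%nat -> w0 <> 0 ->
  w0 ^ 2 * (chain_solution N w0 f0 j t - 2 * chain_solution N w0 f0 (S j) t
            + chain_solution N w0 f0 (S (S j)) t) = ydd N w0 f0 (S j) t.
Proof.
  intros HN Hw. pose proof (INR_N_ge1 N HN) as HN1.
  assert (H : sum_n_m (fun m => gamma_coef m N j * cos (omega_m w0 m N * t) + (-2) * (gamma_coef m N (S j) * cos (omega_m w0 m N * t))
                 + gamma_coef m N (S (S j)) * cos (omega_m w0 m N * t)) 1 (2 * N - 2)
       = (- / w0 ^ 2) * sum_n_m (fun m => gamma_coef m N (S j) * omega_m w0 m N ^ 2 * cos (omega_m w0 m N * t)) 1 (2 * N - 2) :> R).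
  { rewrite <- sum_scal. apply sum_ext. intros k _.
    replace (gamma_coef k N j * cos (omega_m w0 k N * t) + -2 * (gamma_coef k N (S j) * cos (omega_m w0 k N * t)) + gamma_coef k N (S (S j)) * cos (omega_m w0 k N * t))
      with ((gamma_coef k N j - 2 * gamma_coef k N (S j) + gamma_coef k N (S (S j))) * cos (omega_m w0 k N * t)) by ring.
    rewrite gamma_lap by exact HN. unfold omega_m, th. field. exact Hw. }
  rewrite !sum_add, !sum_scal in H.
  unfold chain_solution, ydd.
  set (X := sum_n_m (fun m => gamma_coef m N (S j) * omega_m w0 m N ^ 2 * cos (omega_m w0 m N * t)) 1 (2 * N - 2)) in *.
  assert (HX : X = - w0 ^ 2 * (sum_n_m (fun m => gamma_coef m N j * cos (omega_m w0 m N * t)) 1 (2 * N - 2) + -2 *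
      sum_n_m (fun m => gamma_coef m N (S j) * cos (omega_m w0 m N * t)) 1 (2 * N - 2) +
      sum_n_m (fun m => gamma_coef m N (S (S j)) * cos (omega_m w0 m N * t)) 1 (2 * N - 2)) :> R).
  { apply tiny; [exact Hw | exact H]. }
  rewrite HX, !S_INR. field. split; [lra | exact Hw].
Qed.

Lemma ode_last M w0 f0 t : w0 <> 0 ->
  w0 ^ 2 * (chain_solution (S (S M)) w0 f0 M t - chain_solution (S (S M)) w0 f0 (S M) t) + f0
  = ydd (S (S M)) w0 f0 (S M) t.
Proof.
  intro Hw. rewrite <- ode_mid by (auto; lia).
  assert (E : chain_solution (S (S M)) w0 f0 (S (S M)) t = chain_solution (S (S M)) w0 f0 (S M) t + f0 / w0 ^ 2).
  { unfold chain_solution.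
    rewrite (sum_ext (fun m => gamma_coef m (S (S M)) (S (S M)) * cos (omega_m w0 m (S (S M)) * t))
                     (fun m => gamma_coef m (S (S M)) (S M) * cos (omega_m w0 m (S (S M)) * t))).
    - rewrite (S_INR (S M)). ring.
    - intros k _. now rewrite gamma_free. }
  rewrite E. field. exact Hw.
Qed.

Fixpoint ssum (f : nat -> R) (n : nat) : R :=
  match n with 0%nat => 0 | S n => ssum f n + f n end.

Lemma deriv_opp (f : R -> R) df x : is_derive f x df -> is_derive (fun t => - f t) x (- df).
Proof.
  intro H. auto_derive.
  - exists df; exact H.
  - replace (Derive (fun x0 : R => f x0) x) with df by (symmetry; apply is_derive_unique; exact H). ring.
Qed.

Lemma deriv_minus (f g : R -> R) df dg x : is_derive f x df -> is_derive g x dg ->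
  is_derive (fun t => f t - g t) x (df - dg).
Proof. intros Hf Hg. apply deriv_plus; [exact Hf | apply deriv_opp; exact Hg]. Qed.

Lemma deriv_sq (f : R -> R) df x : is_derive f x df -> is_derive (fun t => f t ^ 2) x (2 * f x * df).
Proof.
  intro H. auto_derive.
  - exists df; exact H.
  - replace (Derive (fun x0 : R => f x0) x) with df by (symmetry; apply is_derive_unique; exact H). ring.
Qed.

Lemma deriv_scal (f : R -> R) df c x : is_derive f x df -> is_derive (fun t => c * f t) x (c * df).
Proof.
  intro H. auto_derive.
  - exists df; exact H.
  - replace (Derive (fun x0 : R => f x0) x) with df by (symmetry; apply is_derive_unique; exact H). ring.
Qed.

Lemma ssum_deriv (f : nat -> R -> R) (df : nat -> R) n x :
  (forall k, (k < n)%nat -> is_derive (f k) x (df k)) ->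
  is_derive (fun t => ssum (fun k => f k t) n) x (ssum df n).
Proof.
  induction n; intro H; simpl.
  - apply deriv_zero.
  - apply deriv_plus. + apply IHn. intros k Hk. apply H. lia. + apply H. lia.
Qed.

Lemma ssum_ext f g n : (forall k, (k < n)%nat -> f k = g k) -> ssum f n = ssum g n.
Proof. induction n; intro H; simpl; auto. rewrite IHn, H; auto; intros; apply H; lia. Qed.

Lemma ssum_zero n : ssum (fun _ => 0) n = 0.
Proof. induction n; simpl; [ring | rewrite IHn; ring]. Qed.

Lemma ssum_scal c f n : ssum (fun k => c * f k) n = c * ssum f n.
Proof. induction n; simpl; [ring | rewrite IHn; ring]. Qed.

Lemma ssum_sq_nonneg g n : 0 <= ssum (fun k => g k ^ 2) n.
Proof. induction n; cbn [ssum]; [lra | pose proof (pow2_ge_0 (g n)); lra]. Qed.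

Lemma ssum_sq_zero g n : ssum (fun k => g k ^ 2) n = 0 -> forall k, (k < n)%nat -> g k = 0.
Proof.
  induction n; intros H k Hk; [lia|]. cbn [ssum] in H.
  pose proof (ssum_sq_nonneg g n).
  assert (g n ^ 2 = 0) by nra. assert (ssum (fun k => g k ^ 2) n = 0) by nra.
  destruct (Nat.eq_dec k n) as [->|Hne].
  - nra.
  - apply IHn; auto. lia.
Qed.

Lemma tele (p P d : nat -> R) w K :
  (forall j, (j < K)%nat -> P (S j) = w * (d (S j) - d j)) ->
  ssum (fun k => p k * P k) (S K) + w * ssum (fun k => d k * (p (S k) - p k)) K
  = p 0%nat * P 0%nat + w * (p K * d K - p 0%nat * d 0%nat).
Proof.
  induction K; intro H.
  - simpl. ring.
  - change (ssum (fun k => p k * P k) (S (S K))) with (ssum (fun k => p k * P k) (S K) + p (S K) * P (S K)).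
    change (ssum (fun k => d k * (p (S k) - p k)) (S K)) with
      (ssum (fun k => d k * (p (S k) - p k)) K + d K * (p (S K) - p K)).
    rewrite H by lia.
    assert (IH := IHK (fun j Hj => H j ltac:(lia))). lra.
Qed.

Lemma const_from_deriv (f : R -> R) :
  (forall s, 0 <= s -> is_derive f s 0) -> forall t, 0 <= t -> f t = f 0.
Proof.
  intros H t Ht.
  destruct (MVT_gen f 0 t (fun _ => 0)) as [c [_ Hc]].
  - intros z Hz. rewrite Rmin_left in Hz by lra. apply H. lra.
  - intros z Hz. rewrite Rmin_left in Hz by lra. apply derivable_continuous_pt.
    exists 0. apply is_derive_Reals. apply H. lra.
  - lra.
Qed.


Lemma gamma0 m N : gamma_coef m N 0 = 0.
Proof. unfold gamma_coef. change (INR 0) with 0. rewrite Rmult_0_r, Rmult_0_l.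
  unfold Rdiv. rewrite Rmult_0_l, sin_0. ring. Qed.

Lemma ydd0 N w0 f0 s : ydd N w0 f0 0 s = 0.
Proof.
  unfold ydd. rewrite (sum_ext _ (fun _ => 0)).
  - rewrite sum_n_m_const. ring.
  - intros k _. rewrite gamma0. ring.
Qed.

Lemma yd_at0 N w0 f0 k : yd N w0 f0 k 0 = 0.
Proof.
  unfold yd. rewrite (sum_ext _ (fun _ => 0)).
  - rewrite sum_n_m_const. ring.
  - intros j _. rewrite Rmult_0_r, sin_0. ring.
Qed.

Lemma y_at0 N w0 f0 k : (2 <= N)%nat -> (k <= N - 1)%nat -> chain_solution N w0 f0 k 0 = 0.
Proof.
  intros HN Hk. unfold chain_solution.
  rewrite (sum_ext _ (fun m => gamma_coef m N k)).
  - change (sum_n_m (fun m => gamma_coef m N k) 1 (2 * N - 2)) with (Sg N k).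
    rewrite Sg_lin by auto. pose proof (INR_N_ge1 N ltac:(lia)). replace (INR k - / (2 * INR N - 1) * ((2 * INR N - 1) * INR k)) with 0 by (field; lra). ring.
  - intros j _. rewrite Rmult_0_r, cos_0. ring.
Qed.

Theorem lemma2 (N : nat) (w0 f0 : R) (x v : nat -> R -> R)
  (HN : (2 <= N)%nat) (Hw0 : 0 < w0) (Hf0 : 0 < f0)
  (Hx : forall k t, (k < N)%nat -> is_derive (x k) t (v k t))
  (H0 : forall t, 0 <= t -> is_derive (v 0%nat) t 0)
  (Hmid : forall k t, (1 <= k)%nat -> (k <= N - 2)%nat -> 0 <= t ->
     is_derive (v k) t (w0 ^ 2 * (x (k - 1)%nat t - 2 * x k t + x (k + 1)%nat t)))
  (Hlast : forall t, 0 <= t ->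
     is_derive (v (N - 1)%nat) t (w0 ^ 2 * (x (N - 2)%nat t - x (N - 1)%nat t) + f0))
  (Hx0 : forall k, (k < N)%nat -> x k 0 = 0)
  (Hv0 : forall k, (k < N)%nat -> v k 0 = 0) :
  forall n t, (n <= N - 1)%nat -> 0 <= t -> x n t = chain_solution N w0 f0 n t.
Proof.
  intros n t Hn Ht.
  assert (Hw : w0 <> 0) by lra.
  destruct N as [|[|M]]; try lia.
  set (N := S (S M)) in *.
  set (u := fun k s => x k s - chain_solution N w0 f0 k s).
  set (p := fun k s => v k s - yd N w0 f0 k s).
  set (Pd := fun k s => Derive (v k) s - ydd N w0 f0 k s).
  assert (Hu : forall k s, (k < N)%nat -> is_derive (u k) s (p k s)).
  { intros k s Hk. unfold u, p. apply deriv_minus; [apply Hx; exact Hk | apply y_deriv]. }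
  assert (Hp : forall k s, (k < N)%nat -> 0 <= s -> is_derive (p k) s (Pd k s)).
  { intros k s Hk Hs. unfold p, Pd. apply deriv_minus; [| apply yd_deriv].
    destruct k as [|k].
    - pose proof (H0 s Hs) as D. rewrite (is_derive_unique _ _ _ D). exact D.
    - destruct (Nat.eq_dec (S k) (N - 1)) as [E|E].
      + rewrite E. pose proof (Hlast s Hs) as D. rewrite (is_derive_unique _ _ _ D). exact D.
      + pose proof (Hmid (S k) s ltac:(lia) ltac:(unfold N in *; lia) Hs) as D.
        rewrite (is_derive_unique _ _ _ D). exact D. }
  assert (P0 : forall s, 0 <= s -> Pd 0%nat s = 0).
  { intros s Hs. unfold Pd. rewrite (is_derive_unique _ _ _ (H0 s Hs)), ydd0. ring. }
  assert (Pmid : forall j s, (S j <= N - 2)%nat -> 0 <= s ->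
            Pd (S j) s = w0 ^ 2 * (u j s - 2 * u (S j) s + u (S (S j)) s)).
  { intros j s Hj Hs. unfold Pd, u.
    rewrite (is_derive_unique _ _ _ (Hmid (S j) s ltac:(lia) Hj Hs)).
    rewrite <- ode_mid by (unfold N; lia || auto).
    replace (S j - 1)%nat with j by lia. replace (S j + 1)%nat with (S (S j)) by lia. ring. }
  assert (PL : forall s, 0 <= s -> Pd (S M) s = w0 ^ 2 * (u M s - u (S M) s)).
  { intros s Hs. unfold Pd, u.
    pose proof (Hlast s Hs) as D. replace (N - 1)%nat with (S M) in D by (unfold N; lia).
    replace (N - 2)%nat with M in D by (unfold N; lia).
    rewrite (is_derive_unique _ _ _ D). unfold N. rewrite <- ode_last by exact Hw. ring. }
  assert (p0 : forall s, 0 <= s -> p 0%nat s = 0).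
  { intros s Hs. rewrite (const_from_deriv (p 0%nat)).
    - unfold p. rewrite Hv0 by (unfold N; lia). rewrite yd_at0. ring.
    - intros r Hr. eapply is_derive_eq; [apply Hp; [unfold N; lia | exact Hr] | apply P0; exact Hr].
    - exact Hs. }
  set (E := fun s => ssum (fun k => p k s ^ 2) N + w0 ^ 2 * ssum (fun k => (u (S k) s - u k s) ^ 2) (S M)).
  assert (HE : forall s, 0 <= s -> is_derive E s 0).
  { intros s Hs. unfold E. eapply is_derive_eq.
    - apply deriv_plus.
      + apply (ssum_deriv (fun k s => p k s ^ 2) (fun k => 2 * p k s * Pd k s)).
        intros k Hk. apply deriv_sq. apply Hp; auto.
      + apply deriv_scal.
        apply (ssum_deriv (fun k s => (u (S k) s - u k s) ^ 2)
                 (fun k => 2 * (u (S k) s - u k s) * (p (S k) s - p k s))).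
        intros k Hk. cbv beta. apply (deriv_sq (fun r => u (S k) r - u k r)). apply deriv_minus; [exact (Hu (S k) s ltac:(unfold N; lia)) | exact (Hu k s ltac:(unfold N; lia))].
    - rewrite (ssum_ext _ (fun k => 2 * (p k s * Pd k s))) by (intros; ring).
      rewrite (ssum_ext (fun k => 2 * (u (S k) s - u k s) * (p (S k) s - p k s))
                        (fun k => 2 * ((u (S k) s - u k s) * (p (S k) s - p k s)))) by (intros; ring).
      rewrite !ssum_scal.
      pose proof (tele (fun k => p k s) (fun k => Pd k s) (fun k => u (S k) s - u k s) (w0 ^ 2) M) as T.
      cbv beta in T.
      change (ssum (fun k => p k s * Pd k s) N) with (ssum (fun k => p k s * Pd k s) (S M) + p (S M) s * Pd (S M) s).
      change (ssum (fun k => (u (S k) s - u k s) * (p (S k) s - p k s)) (S M)) with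
        (ssum (fun k => (u (S k) s - u k s) * (p (S k) s - p k s)) M + (u (S M) s - u M s) * (p (S M) s - p M s)).
      assert (T' := T (fun j Hj => ltac:(rewrite Pmid by (unfold N; lia || exact Hs); ring))).
      rewrite PL, p0, P0 in * by exact Hs. nra. }
  assert (E0 : E 0 = 0).
  { unfold E. rewrite (ssum_ext _ (fun _ => 0)), (ssum_ext (fun k => (u (S k) 0 - u k 0) ^ 2) (fun _ => 0)), !ssum_zero.
    - ring.
    - intros k Hk. unfold u. rewrite !Hx0 by (unfold N; lia). rewrite !y_at0 by (unfold N in *; lia). ring.
    - intros k Hk. unfold p. rewrite Hv0 by exact Hk. rewrite yd_at0. ring. }
  assert (pz : forall s, 0 <= s -> forall k, (k < N)%nat -> p k s = 0).
  { intros s Hs.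
    assert (Et : E s = 0) by (rewrite (const_from_deriv E HE s Hs); exact E0).
    apply (ssum_sq_zero (fun k => p k s) N). unfold E in Et.
    pose proof (ssum_sq_nonneg (fun k => p k s) N).
    pose proof (ssum_sq_nonneg (fun k => u (S k) s - u k s) (S M)) as H1.
    assert (0 <= w0 ^ 2 * ssum (fun k => (u (S k) s - u k s) ^ 2) (S M)) by (apply Rmult_le_pos; [nra | exact H1]).
    lra. }
  assert (Hn' : (n < N)%nat) by (unfold N in *; lia).
  assert (Uz : u n t = u n 0).
  { apply const_from_deriv; [|exact Ht]. intros s Hs.
    eapply is_derive_eq; [apply Hu; exact Hn' | apply pz; assumption]. }
  unfold u in Uz. rewrite Hx0, y_at0 in Uz by (unfold N in *; lia). lra.
Qed.
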